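(* Let $\mathfrak F=(X,\parallel,Y,S_\vee)$ be a frame satisfying axioms (F0)–(F4). Then for every family $(A_j)_{j\in J}$ of stable sets, $\overline\eta_S\big(\bigvee_{j\in J}A_j\big)=\bigvee_{j\in J}\overline\eta_S(A_j)$, where the left join is taken in $\mathcal G(X)$ and the right join in $\mathcal G(Y)$.
   Context: A polarity is $(X,\parallel,Y)$ with $X,Y$ nonempty sets and ${\parallel}\subseteq X\times Y$; $I=(X\times Y)\setminus{\parallel}$. For $U\subseteq X$, $U'=\{y\in Y:\forall x\in U\;x\parallel y\}$; for $V\subseteq Y$, $V'=\{x\in X:\forall y\in V\;x\parallel y\}$. $A\subseteq X$ is stable if $A=A''$; $B\subseteq Y$ is co-stable if $B=B''$; $\mathcal G(X),\mathcal G(Y)$ are the complete lattices of stable/co-stable sets (meets = intersections, joins $\bigvee_jA_j=(\bigcup_jA_j)''$). Preorders: $x\preceq z$ iff $\{x\}'\subseteq\{z\}'$ on $X$; $y\preceq v$ iff $\{y\}'\subseteq\{v\}'$ on $Y$; separated means both are partial orders ($\leq$). $\Gamma u=\{w:u\preceq w\}$. Closed elements: sets $\Gamma x$ in $\mathcal G(X)$, $\Gamma y$ in $\mathcal G(Y)$. A frame is $(X,\parallel,Y,S_\vee)$ with $S_\vee\subseteq Y\times X$; $S_\vee x=\{y:yS_\vee x\}$, $yS_\vee=\{x:yS_\vee x\}$; $zS'_\vee x$ iff $\forall y(yS_\vee x\Rightarrow z\parallel y)$. Axioms: (F0) $\forall x\exists y\;xIy$, $\forall y\exists x\;xIy$;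 (F1) separated; (F2) each $S_\vee x$ is a closed element of $\mathcal G(Y)$; (F3) each $yS_\vee$ is a down-set; (F4) for each $x$, $\{z:zS'_\vee x\}\in\mathcal G(X)$ and for each $z$, $\{x:zS'_\vee x\}\in\mathcal G(X)$. For $A\in\mathcal G(X)$, $\overline\eta_S(A)=(\bigcup_{x\in A}S_\vee x)''$. *)

(* Defs.v *)
(* subsets are predicates [T -> Prop]; set equality is Leibniz
   equality of predicates (extensionality axioms are whitelisted). *)
Set Implicit Arguments.

Section Polarity.
Variables (X Y : Type) (par : X -> Y -> Prop).

Definition primeX (U : X -> Prop) : Y -> Prop :=
  fun y => forall x, U x -> par x y.
Definition primeY (V : Y -> Prop) : X -> Prop :=
  fun x => forall y, V y -> par x y.

Definition stableX (A : X -> Prop) : Prop := primeY (primeX A) = A.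
Definition costableY (B : Y -> Prop) : Prop := primeX (primeY B) = B.

Definition joinX (J : Type) (A : J -> X -> Prop) : X -> Prop :=
  primeY (primeX (fun x => exists j, A j x)).
Definition joinY (J : Type) (B : J -> Y -> Prop) : Y -> Prop :=
  primeX (primeY (fun y => exists j, B j y)).

Definition leX (x z : X) : Prop := forall y, par x y -> par z y.
Definition leY (y v : Y) : Prop := forall x, par x y -> par x v.

Definition separated : Prop :=
  (forall x z, leX x z -> leX z x -> x = z) /\
  (forall y v, leY y v -> leY v y -> y = v).

Definition GammaX (x : X) : X -> Prop := fun w => leX x w.
Definition GammaY (y : Y) : Y -> Prop := fun w => leY y w.

Definition closedY (B : Y -> Prop) : Prop := exists y, B = GammaY y.

Variable S : Y -> X -> Prop.

Definition Sx (x : X) : Y -> Prop := fun y => S y x.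
Definition yS (y : Y) : X -> Prop := fun x => S y x.
Definition Sprime (z x : X) : Prop := forall y, S y x -> par z y.

Definition F0 : Prop :=
  (forall x, exists y, ~ par x y) /\ (forall y, exists x, ~ par x y).
Definition F1 : Prop := separated.
Definition F2 : Prop := forall x, closedY (Sx x).
Definition F3 : Prop := forall y x z, yS y x -> leX z x -> yS y z.
Definition F4 : Prop :=
  (forall x, stableX (fun z => Sprime z x)) /\
  (forall z, stableX (fun x => Sprime z x)).

Definition etaS (A : X -> Prop) : Y -> Prop :=
  primeX (primeY (fun y => exists x, A x /\ Sx x y)).

End Polarity.

(* Main.v *)
Require Import Defs.
From Stdlib Require Import FunctionalExtensionality PropExtensionality.

Theorem proposition3p11 (X Y : Type) (par : X -> Y -> Prop) (S : Y -> X -> Prop)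
  (hX : inhabited X) (hY : inhabited Y)
  (h0 : F0 par) (h1 : F1 par) (h2 : F2 par S) (h3 : F3 par S) (h4 : F4 par S)
  (J : Type) (A : J -> X -> Prop) (hA : forall j, stableX par (A j)) :
  etaS par S (joinX par A) = joinY par (fun j => etaS par S (A j)).
Proof.
  unfold etaS, joinY.
  assert (E1 : primeY par (fun y => exists x, joinX par A x /\ Sx S x y)
             = primeY par (fun y => exists x, (exists j, A j x) /\ Sx S x y)).
  { apply functional_extensionality; intro z; apply propositional_extensionality.
    unfold primeY, Sx; split.
    - intros Hz y [x [Hx Hy]]. apply Hz. exists x. split; [|exact Hy].
      unfold joinX, primeY, primeX. intros y' Hy'. apply Hy'. exact Hx.
    - intros Hz y [x [Hx Hy]].
      destruct h4 as [_ H4]. specialize (H4 z). unfold stableX in H4.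
      assert (HP : Sprime par S z x).
      { change ((fun x0 => Sprime par S z x0) x). rewrite <- H4. unfold joinX in Hx. unfold primeY, primeX in *.
        intros y' Hy'. apply Hx. intros x' Hx'. apply Hy'.
        unfold Sprime. intros y'' Hy''. apply Hz. exists x'. split; assumption. }
      apply HP. exact Hy. }
  assert (E2 : primeY par (fun y => exists j,
                 primeX par (primeY par (fun y0 => exists x, A j x /\ Sx S x y0)) y)
             = primeY par (fun y => exists x, (exists j, A j x) /\ Sx S x y)).
  { apply functional_extensionality; intro z; apply propositional_extensionality.
    unfold primeY, primeX, Sx; split.
    - intros Hz y [x [[j Hj] Hy]]. apply Hz. exists j.
      intros x' Hx'. apply Hx'. exists x. split; assumption.
    - intros Hz y [j Hy]. apply Hy. intros y' [x [Hx Hy']]. apply Hz.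
      exists x. split; [exists j; exact Hx | exact Hy']. }
  rewrite E1, E2. reflexivity.
Qed.
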